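(* Let $k\ge1$ be an integer and $n$ a positive integer with $n>\frac{k+2}{24}$. Then $$\frac{e^{\pi\sqrt{2n/3}}}{4n\sqrt3}\cdot\frac{\widehat L_2(k)}{n^{k/2}}<\frac{\sqrt{12}\,e^{\mu(n)}}{24n-1}\cdot\frac{1}{\mu(n)^k}<\frac{e^{\pi\sqrt{2n/3}}}{4n\sqrt3}\cdot\frac{\widehat U_2(k)}{n^{k/2}},$$ where $\widehat L_2(k)=\frac{1}{\alpha^k\,24^{k/2}}\left(1-\frac{1}{4\sqrt n}\right)$ and $\widehat U_2(k)=\frac{1}{\alpha^k\,24^{k/2}}\left(1+\frac{k}{3n}\right)$.
   Context: $\alpha=\pi/6$ and $\mu(n)=\frac{\pi}{6}\sqrt{24n-1}$. *)

(* Defs.v *)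
From Stdlib Require Import Reals.
Open Scope R_scope.

Definition alpha : R := PI / 6.
Definition mu (n : R) : R := PI / 6 * sqrt (24 * n - 1).

(* x^(k/2) for x >= 0 written as (sqrt x)^k *)
Definition L2hat (k : nat) (n : R) : R :=
  / (alpha ^ k * sqrt 24 ^ k) * (1 - 1 / (4 * sqrt n)).
Definition U2hat (k : nat) (n : R) : R :=
  / (alpha ^ k * sqrt 24 ^ k) * (1 + INR k / (3 * n)).

(* Main.v *)
Require Import Defs.
From Stdlib Require Import Reals.
From Stdlib Require Import Lra Lia Psatz.
Open Scope R_scope.

Lemma bern (w : R) (p : nat) : 0 <= w <= 1 -> 1 - INR p * w <= (1 - w) ^ p.
Proof.
  intros Hw. induction p as [|p IH].
  - simpl. lra.
  - rewrite S_INR. simpl.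
    assert (0 <= INR p) by apply pos_INR.
    assert (0 <= (1-w)^p) by (apply pow_le; lra).
    nra.
Qed.

Theorem mainTheorem15 (k n : nat) :
  (1 <= k)%nat -> (0 < n)%nat -> INR n > (INR k + 2) / 24 ->
  let N := INR n in
  exp (PI * sqrt (2 * N / 3)) / (4 * N * sqrt 3) * (L2hat k N / sqrt N ^ k)
    < sqrt 12 * exp (mu N) / (24 * N - 1) * (1 / mu N ^ k)
  /\
  sqrt 12 * exp (mu N) / (24 * N - 1) * (1 / mu N ^ k)
    < exp (PI * sqrt (2 * N / 3)) / (4 * N * sqrt 3) * (U2hat k N / sqrt N ^ k).
Proof.
  intros Hk Hn Hnk N.
  assert (Hkn : (k + 3 <= 24 * n)%nat).
  { assert (INR (k+2) < INR (24*n)).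
    { rewrite plus_INR, mult_INR. simpl INR at 1. unfold N in *. simpl. lra. }
    apply INR_lt in H. lia. }
  apply le_INR in Hkn. rewrite plus_INR, mult_INR in Hkn.
  replace (INR 3) with 3 in Hkn by (simpl; lra).
  replace (INR 24) with 24 in Hkn by (simpl; lra).
  fold N in Hkn.
  set (K := INR k) in *.
  assert (HK : 1 <= K) by (apply le_INR in Hk; exact Hk).
  assert (HN : 1 <= N) by (apply le_INR in Hn; exact Hn).
  set (s := sqrt N).
  assert (Hs0 : 0 < s) by (apply sqrt_lt_R0; lra).
  assert (Hss : s * s = N) by (apply sqrt_sqrt; lra).
  set (r := sqrt 24).
  assert (Hr0 : 0 < r) by (apply sqrt_lt_R0; lra).
  assert (Hrr : r * r = 24) by (apply sqrt_sqrt; lra).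
  set (c := sqrt 3).
  assert (Hc0 : 0 < c) by (apply sqrt_lt_R0; lra).
  assert (Hcc : c * c = 3) by (apply sqrt_sqrt; lra).
  assert (H12 : sqrt 12 = 2 * c) by (apply sqrt_lem_1; nra).
  set (q := sqrt (24 * N - 1)).
  assert (Hq0 : 0 < q) by (apply sqrt_lt_R0; lra).
  assert (Hqq : q * q = 24 * N - 1) by (apply sqrt_sqrt; lra).
  set (X := r * s).
  assert (HX0 : 0 < X) by (unfold X; nra).
  assert (HXX : X * X = 24 * N) by (unfold X; nra).
  set (a := alpha).
  assert (Ha0 : 0 < a) by (unfold a, alpha; pose proof PI_RGT_0; lra).
  assert (Ha1 : a <= 2/3) by (unfold a, alpha; pose proof PI_4; lra).
  assert (HA : PI * sqrt (2 * N / 3) = a * X).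
  { rewrite (sqrt_lem_1 _ (X/6)); [unfold a, alpha; field | nra | nra | nra]. }
  assert (HB : mu N = a * q) by reflexivity.
  assert (HqX : q < X) by nra.
  assert (Hdiff : (X - q) * (X + q) = 1) by nra.
  rewrite HA, HB, H12.
  unfold L2hat, U2hat. fold a r s K.
  replace (24 * N - 1) with (q*q) by (rewrite Hqq; reflexivity).
  set (F := 1 - 1 / (4 * s)).
  set (G := 1 + K / (3 * N)).
  set (EX := exp (a * X)). set (Eq := exp (a * q)).
  assert (HEX : 0 < EX) by apply exp_pos.
  assert (HEq : 0 < Eq) by apply exp_pos.
  assert (Hak : 0 < a ^ k) by (apply pow_lt; lra).
  assert (Hrk : 0 < r ^ k) by (apply pow_lt; lra).
  assert (Hsk : 0 < s ^ k) by (apply pow_lt; lra).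
  assert (Hqk : 0 < q ^ k) by (apply pow_lt; lra).
  assert (HXk : X ^ k = r ^ k * s ^ k) by (unfold X; apply Rpow_mult_distr).
  set (C := EX / (4 * N * c * (a ^ k * X ^ k))).
  assert (HC : 0 < C).
  { unfold C. apply Rdiv_lt_0_compat; [lra|]. rewrite HXk.
    repeat apply Rmult_lt_0_compat; lra. }
  assert (HL : EX / (4 * N * c) * (/ (a ^ k * r ^ k) * F / s ^ k) = C * F).
  { unfold C. rewrite HXk. field. repeat split; lra. }
  assert (HU : EX / (4 * N * c) * (/ (a ^ k * r ^ k) * G / s ^ k) = C * G).
  { unfold C. rewrite HXk. field. repeat split; lra. }
  set (T := 8 * N * (c * c) * X ^ k * Eq / (q * q * q ^ k * EX)).
  assert (HM : 2 * c * Eq / (q * q) * (1 / (a * q) ^ k) = C * T).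
  { unfold C, T. rewrite Rpow_mult_distr, HXk. field. repeat split; lra. }
  rewrite HL, HU, HM.
  assert (HXkp : 0 < X ^ k) by (rewrite HXk; nra).
  assert (Hden : 0 < q * q * q ^ k * EX) by (repeat apply Rmult_lt_0_compat; lra).
  assert (HqkX : q ^ k <= X ^ k) by (apply pow_incr; lra).
  split; apply Rmult_lt_compat_l; auto.
  -
    unfold T. apply (Rmult_lt_reg_r (q * q * q ^ k * EX)); auto.
    replace (8 * N * (c * c) * X ^ k * Eq / (q * q * q ^ k * EX) * (q * q * q ^ k * EX))
      with (X * X * X ^ k * Eq) by (rewrite Hcc, HXX; field; repeat split; lra).
    assert (Hy : a * (X - q) * (4 * s) < 1).
    { assert (4 * a < r) by nra.
      assert (4 * a * s < X + q) by (unfold X in *; nra).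
      nra. }
    assert (HEe : Eq = EX * exp (- (a * (X - q)))).
    { unfold Eq, EX. rewrite <- exp_plus. f_equal. ring. }
    pose proof (exp_ineq1_le (- (a * (X - q)))) as He.
    assert (HF : F < 1 - a * (X - q)).
    { unfold F. assert (a * (X - q) < 1 / (4 * s)); [|lra].
      apply (Rmult_lt_reg_r (4 * s)); [lra|].
      replace (1 / (4 * s) * (4 * s)) with 1 by (field; lra). lra. }
    assert (HFE : F * EX < Eq) by nra.
    assert (HQ : q * q * q ^ k <= X * X * X ^ k).
    { apply Rmult_le_compat; try nra. }
    assert (0 < q * q * q ^ k) by (repeat apply Rmult_lt_0_compat; lra).
    nra.
  - unfold T. apply (Rmult_lt_reg_r (q * q * q ^ k * EX)); auto.
    replace (8 * N * (c * c) * X ^ k * Eq / (q * q * q ^ k * EX) * (q * q * q ^ k * EX))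
      with (X * X * X ^ k * Eq) by (rewrite Hcc, HXX; field; repeat split; lra).
    assert (HEE : Eq < EX) by (unfold Eq, EX; apply exp_increasing; nra).
    set (w := (X - q) / X).
    assert (Hqw : q = X * (1 - w)) by (unfold w; field; lra).
    assert (Hw0 : 0 <= w <= 1).
    { unfold w; split; [unfold Rdiv; apply Rmult_le_pos; [lra | left; apply Rinv_0_lt_compat; lra]|].
      apply (Rmult_le_reg_r X); auto. replace ((X - q) / X * X) with (X - q) by (field; lra). lra. }
    assert (Hwb : w * (X * (X + q)) = 1) by (unfold w; field_simplify; nra).
    assert (Hpow : q * q * q ^ k = X ^ (k + 2) * (1 - w) ^ (k + 2)).
    { rewrite <- Rpow_mult_distr, <- Hqw, pow_add. simpl. ring. }
    pose proof (bern w (k + 2) Hw0) as Hb.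
    rewrite plus_INR in Hb. fold K in Hb. replace (INR 2) with 2 in Hb by (simpl; lra).
    assert (HXp : 0 < X ^ (k + 2)) by (apply pow_lt; lra).
    assert (HXX2 : X * X * X ^ k = X ^ (k + 2)) by (rewrite pow_add; simpl; ring).
    assert (HG : 1 <= G * (1 - (K + 2) * w)).
    { set (y := X * X) in *.
      assert (H2y : 2 * y - 1 <= X * (X + q)) by (unfold y; nra).
      assert (Hz : (K + 2) * w * (2 * y - 1) <= K + 2).
      { assert (0 <= (K + 2) * w) by nra.
        assert (Hzz : (K + 2) * w * (2 * y - 1) <= (K + 2) * w * (X * (X + q))) by (apply Rmult_le_compat_l; lra).
        replace ((K + 2) * w * (X * (X + q))) with ((K + 2) * (w * (X * (X + q)))) in Hzz by ring.
        rewrite Hwb in Hzz. lra. }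
      assert (HGy : G * y = y + 8 * K) by (unfold G; rewrite HXX; field; lra).
      assert (Hy24 : K + 3 <= y) by (unfold y; lra).
      assert (Hmain : y * (2 * y - 1) <= (y + 8 * K) * (1 - (K + 2) * w) * (2 * y - 1)) by nra.
      assert (Hyy : y <= (y + 8 * K) * (1 - (K + 2) * w)) by nra.
      apply (Rmult_le_reg_r y); [lra|].
      replace (G * (1 - (K + 2) * w) * y) with (G * y * (1 - (K + 2) * w)) by ring.
      rewrite HGy. lra. }
    assert (HGp : 0 < G) by (unfold G; apply Rplus_lt_0_compat; [lra| apply Rdiv_lt_0_compat; lra]).
    assert (HXq : X * X * X ^ k <= G * (q * q * q ^ k)).
    { rewrite Hpow, HXX2.
      assert (X ^ (k+2) * (1 - (K+2) * w) <= X ^ (k+2) * (1 - w) ^ (k+2)) by nra.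
      nra. }
    assert (0 < q * q * q ^ k) by (repeat apply Rmult_lt_0_compat; lra).
    nra.
Qed.
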